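(* Let $\phi$ be a topological flow on a compact manifold $M$ (with a metric $\mathrm{dist}$ inducing its topology). If the limit set $L(\phi)$ is a finite set consisting of singularities of $\phi$, each of which is Lyapunov stable or Lyapunov unstable, then $\phi$ has the oriented shadowing property.
   Context: A topological flow is a continuous map $\phi:\mathbb{R}\times M\to M$ with $\phi(0,x)=x$, $\phi(s+t,x)=\phi(s,\phi(t,x))$. A singularity is a point fixed by all $\phi(t,\cdot)$. A singularity $p$ is Lyapunov stable if for every neighborhood $V$ of $p$ there is a neighborhood $U$ of $p$ with $\phi(t,x)\in V$ for all $t\ge0$, $x\in U$; Lyapunov unstable if the same holds for $t\le0$. $L(\phi)$ is the union over $x\in M$ of the $\omega$-limit and $\alpha$-limit sets of $x$. A $d$-pseudotrajectory is a map $\xi:\mathbb{R}\to M$ with $\mathrm{dist}(\xi(t+s),\phi(s,\xi(t)))<d$ for all $t\in\mathbb{R}$, $s\in[0,1]$. $\mathrm{Rep}$ is the set of orientation-preserving homeomorphisms of $\mathbb{R}$. $\phi$ has the oriented shadowing property if for every $\varepsilon>0$ there is $d>0$ such that for every $d$-pseudotrajectory $\xi$ there are $x\in M$, $h\in\mathrm{Rep}$ with $\mathrm{dist}(\xi(t),\phi(h(t),x))<\varepsilon$ for all $t\in\mathbb{R}$. *)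

(* Defs.v *)
From HB Require Import structures.
From mathcomp Require Import all_boot all_order all_algebra.
From mathcomp Require Import all_classical all_reals all_analysis.
Set Implicit Arguments. Unset Strict Implicit. Unset Printing Implicit Defensive.
Import Order.TTheory GRing.Theory Num.Theory.
Import numFieldNormedType.Exports.
Local Open Scope classical_set_scope.
Local Open Scope ring_scope.

Section Defs.
Variables (R : realType) (M : topologicalType).

Definition metric_inducing (dist : M -> M -> R) : Prop :=
  [/\ (forall x y, 0 <= dist x y),
      (forall x y, dist x y = 0 <-> x = y),
      (forall x y, dist x y = dist y x),
      (forall x y z, dist x z <= dist x y + dist y z) &
      (forall x (A : set M), nbhs x A <->
         exists2 e : R, 0 < e & [set y | dist x y < e] `<=` A)].

Definition topological_manifold : Prop :=
  exists n : nat, forall x : M, exists U : set M, [/\ open U, U x &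
    exists (f : M -> 'rV[R]_n) (g : 'rV[R]_n -> M),
      [/\ {within U, continuous f}, open (f @` U),
          {within f @` U, continuous g},
          (forall y, U y -> g (f y) = y) &
          (forall v, (f @` U) v -> g v \in U)]].

Definition is_flow (phi : R -> M -> M) : Prop :=
  [/\ continuous (fun p : R * M => phi p.1 p.2),
      (forall x, phi 0 x = x) &
      (forall s t x, phi (s + t) x = phi s (phi t x))].

Definition singularity (phi : R -> M -> M) (p : M) : Prop :=
  forall t, phi t p = p.

Definition lyapunov_stable (phi : R -> M -> M) (p : M) : Prop :=
  forall V, nbhs p V -> exists2 U, nbhs p U &
    forall t x, 0 <= t -> U x -> V (phi t x).

Definition lyapunov_unstable (phi : R -> M -> M) (p : M) : Prop :=
  forall V, nbhs p V -> exists2 U, nbhs p U &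
    forall t x, t <= 0 -> U x -> V (phi t x).

Definition omega_limit (phi : R -> M -> M) (x : M) : set M :=
  \bigcap_(T in [set: R]) closure [set phi t x | t in [set t | T <= t]].

Definition alpha_limit (phi : R -> M -> M) (x : M) : set M :=
  \bigcap_(T in [set: R]) closure [set phi t x | t in [set t | t <= T]].

Definition limit_set (phi : R -> M -> M) : set M :=
  \bigcup_(x in [set: M]) (omega_limit phi x `|` alpha_limit phi x).

Definition pseudotrajectory (dist : M -> M -> R) (phi : R -> M -> M)
  (d : R) (xi : R -> M) : Prop :=
  forall t s, 0 <= s <= 1 -> dist (xi (t + s)) (phi s (xi t)) < d.

End Defs.

Definition Rep (R : realType) (h : R -> R) : Prop :=
  [/\ continuous h, {homo h : x y / x < y} &
      exists g : R -> R, [/\ continuous g, cancel h g & cancel g h]].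

Definition oriented_shadowing (R : realType) (M : topologicalType)
  (dist : M -> M -> R) (phi : R -> M -> M) : Prop :=
  forall eps : R, 0 < eps -> exists2 d : R, 0 < d &
    forall xi : R -> M, pseudotrajectory dist phi d xi ->
      exists (x : M) (h : R -> R), Rep h /\
        forall t, dist (xi t) (phi (h t) x) < eps.

(* Main.v *)
Require Import Defs.
From HB Require Import structures.
From mathcomp Require Import all_boot all_order all_algebra.
From mathcomp Require Import all_classical all_reals all_analysis.
From mathcomp Require Import ring lra.
Import Order.TTheory GRing.Theory Num.Theory.
Import numFieldNormedType.Exports.
Local Open Scope classical_set_scope.
Local Open Scope ring_scope.
Set Implicit Arguments. Unset Strict Implicit. Unset Printing Implicit Defensive.
Section Metric.
Variables (R : realType) (M : topologicalType) (dist : M -> M -> R).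
Hypothesis Hm : metric_inducing dist.

Lemma d_ge0 x y : 0 <= dist x y. Proof. by case: Hm. Qed.
Lemma d_eq0 x y : dist x y = 0 <-> x = y. Proof. by case: Hm. Qed.
Lemma d_sym x y : dist x y = dist y x. Proof. by case: Hm. Qed.
Lemma d_tri x y z : dist x z <= dist x y + dist y z. Proof. by case: Hm. Qed.
Lemma d_nbhs x A : nbhs x A <-> exists2 e : R, 0 < e & [set y | dist x y < e] `<=` A.
Proof. by case: Hm. Qed.
Lemma d_xx x : dist x x = 0. Proof. by apply/d_eq0. Qed.

Lemma ball_nbhs x e : 0 < e -> nbhs x [set y | dist x y < e].
Proof. by move=> e0; apply/d_nbhs; exists e. Qed.

Lemma ball_open x e : open [set y | dist x y < e].
Proof.
rewrite openE => y /= hy; apply/d_nbhs; exists (e - dist x y); first by rewrite subr_gt0.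
move=> z /= hz; apply: (le_lt_trans (d_tri x y z)); by rewrite -ltrBrDl.
Qed.

Lemma d_small x y : (forall e, 0 < e -> dist x y < e) -> x = y.
Proof.
move=> H; apply/d_eq0; apply/eqP; rewrite eq_le d_ge0 andbT.
apply/ler_addgt0Pr => e e0; rewrite add0r; apply/ltW; exact: H.
Qed.

Lemma cont_d (f : M -> M) x : f @ x --> f x ->
  forall e, 0 < e -> exists2 d : R, 0 < d & forall y, dist x y < d -> dist (f x) (f y) < e.
Proof.
move=> cf e e0; have /cf /d_nbhs [d d0 Hd] := ball_nbhs (f x) e0.
by exists d => // y /Hd.
Qed.

Lemma closure_d (A : set M) z : closure A z ->
  forall e, 0 < e -> exists y, A y /\ dist z y < e.
Proof.
move=> cl e e0; have [y [Ay hy]] := cl _ (ball_nbhs z e0); by exists y.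
Qed.

Lemma in_closure_d (A : set M) z : (forall e, 0 < e -> exists y, A y /\ dist z y < e) ->
  closure A z.
Proof.
move=> H B /d_nbhs [e e0 He]; have [y [Ay hy]] := H e e0; exists y; split => //; exact: He.
Qed.

Lemma closed_far (Q : set M) r : closed [set x | forall q, Q q -> r <= dist q x].
Proof.
move=> z /closure_d cl q Qq; apply/ler_addgt0Pr => e e0.
have [y [Hy hy]] := cl e e0.
apply: (le_trans (Hy q Qq)); apply: (le_trans (d_tri q z y)).
by rewrite lerD2l ltW // d_sym.
Qed.

Lemma closed_cball p r : closed [set x | dist p x <= r].
Proof.
move=> z /closure_d cl; apply/ler_addgt0Pr => e e0.
have [y [Hy hy]] := cl e e0.
apply: (le_trans (d_tri p y z)); apply: lerD => //; by rewrite d_sym ltW.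
Qed.

End Metric.
Section Flow.
Variables (R : realType) (M : topologicalType) (dist : M -> M -> R).
Hypothesis Hm : metric_inducing dist.
Hypothesis Hc : compact [set: M].
Variable phi : R -> M -> M.
Hypothesis Hf : is_flow phi.

Lemma phi0 x : phi 0 x = x. Proof. by case: Hf. Qed.
Lemma phiD s t x : phi (s + t) x = phi s (phi t x). Proof. by case: Hf. Qed.
Lemma phi_inv t x : phi (- t) (phi t x) = x.
Proof. by rewrite -phiD addNr phi0. Qed.

Lemma cont_joint s x e : 0 < e -> exists a : R, exists b : R, [/\ 0 < a, 0 < b &
  forall s' y, `|s - s'| < a -> dist x y < b -> dist (phi s x) (phi s' y) < e].
Proof.
move=> e0; case: Hf => cf _ _.
have := cf (s, x) _ (ball_nbhs Hm (phi s x) e0).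
case => [[A1 A2]] /= [] /nbhs_ballP [a a0 Ha] /(d_nbhs Hm) [b b0 Hb] HA.
exists a, b; split => // s' y h1 h2.
have : (A1 `*` A2) (s', y) by split; [apply: Ha | apply: Hb].
by move/HA.
Qed.

Lemma cont_t t x e : 0 < e -> exists2 b : R, 0 < b &
  forall y, dist x y < b -> dist (phi t x) (phi t y) < e.
Proof.
move=> e0; have [a [b [a0 b0 H]]] := cont_joint t x e0.
exists b => // y hy; apply: H => //; by rewrite subrr normr0.
Qed.

Lemma pseudo_mono d d' xi : d <= d' -> pseudotrajectory dist phi d xi ->
  pseudotrajectory dist phi d' xi.
Proof. by move=> dd H t s hs; apply: lt_le_trans (H t s hs) dd. Qed.

Lemma orbit_pseudo d c x : 0 < d -> pseudotrajectory dist phi d (fun t => phi (t + c) x).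
Proof.
move=> d0 t s _; rewrite -phiD (_ : s + (t + c) = t + s + c); last by ring.
by rewrite d_xx.
Qed.

End Flow.
Section Flow2.
Variables (R : realType) (M : topologicalType) (dist : M -> M -> R).
Hypothesis Hm : metric_inducing dist.
Hypothesis Hc : compact [set: M].
Variable phi : R -> M -> M.
Hypothesis Hf : is_flow phi.

Lemma compact01 : compact [set s : R | 0 <= s <= 1].
Proof.
rewrite (_ : [set s : R | 0 <= s <= 1] = `[0, 1]%classic); first exact: segment_compact.
by apply/seteqP; split => s /=; rewrite in_itv.
Qed.

Lemma equi_local x eta : 0 < eta -> exists2 b : R, 0 < b & forall y, dist x y < b ->
  forall s, 0 <= s <= 1 -> dist (phi s x) (phi s y) < eta.
Proof.
move=> eta0.
suff : \forall y \near x, forall s, 0 <= s <= 1 -> dist (phi s x) (phi s y) < eta.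
  by move=> /(d_nbhs Hm) [b b0 Hb]; exists b => // y /Hb.
apply: ((proj1 (compact_near_coveringP _) compact01) M (nbhs x)
  (fun y s => dist (phi s x) (phi s y) < eta)).
- move=> s Ks.
  have e2 : 0 < eta / 2 by rewrite divr_gt0.
  have [a [b [a0 b0 H]]] := cont_joint Hm Hf s x e2.
  exists ([set s' | `|s - s'| < a], [set y | dist x y < b]).
    split; last exact: ball_nbhs.
    by apply/nbhs_ballP; exists a => // ? ?.
  move=> [s' y] [/= h1 h2].
  apply: (le_lt_trans (d_tri Hm _ (phi s x) _)).
  rewrite (d_sym Hm (phi s' x)).
  have -> : eta = eta / 2 + eta / 2 by field.
  apply: ltrD; apply: H => //; by rewrite d_xx.
Qed.

Lemma equi eta : 0 < eta -> exists2 g : R, 0 < g & forall x y, dist x y < g ->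
  forall s, 0 <= s <= 1 -> dist (phi s x) (phi s y) < eta.
Proof.
move=> eta0.
suff : \forall g \near (0:R), forall x, [set: M] x -> forall y, dist x y < g ->
    forall s, 0 <= s <= 1 -> dist (phi s x) (phi s y) < eta.
  move=> /nbhs_ballP [e e0 He].
  exists (e / 2); first by rewrite divr_gt0.
  move=> x; apply: He => //; rewrite /ball /= sub0r normrN gtr0_norm ?divr_gt0 //.
  by rewrite ltr_pdivrMr // ltr_pMr // ltr1n.
apply: ((proj1 (compact_near_coveringP _) Hc) R (nbhs (0:R))
  (fun g x => forall y, dist x y < g -> forall s, 0 <= s <= 1 -> dist (phi s x) (phi s y) < eta)).
- move=> x _.
  have e2 : 0 < eta / 2 by rewrite divr_gt0.
  have [b b0 H] := equi_local x e2.
  have b2 : 0 < b / 2 by rewrite divr_gt0.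
  exists ([set x' | dist x x' < b / 2], [set g : R | `|0 - g| < b / 2]).
    split; first exact: ball_nbhs.
    by apply/nbhs_ballP; exists (b / 2) => // ? ?.
  move=> [x' g] [/= h1 h2] y hy s Hs.
  have hg : g < b / 2.
    by apply: le_lt_trans h2; rewrite sub0r normrN ler_norm.
  apply: (le_lt_trans (d_tri Hm _ (phi s x) _)).
  have -> : eta = eta / 2 + eta / 2 by field.
  apply: ltrD.
    rewrite (d_sym Hm (phi s x')); apply: H => //; apply: lt_trans h1 _.
    by rewrite ltr_pdivrMr // ltr_pMr // ltr1n.
  apply: H => //; apply: (le_lt_trans (d_tri Hm _ x' _)).
  have -> : b = b / 2 + b / 2 by field.
  by apply: ltrD => //; apply: lt_trans hy hg.
Qed.

End Flow2.
Section Flow3.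
Variables (R : realType) (M : topologicalType) (dist : M -> M -> R).
Hypothesis Hm : metric_inducing dist.
Hypothesis Hc : compact [set: M].
Variable phi : R -> M -> M.
Hypothesis Hf : is_flow phi.

Lemma track_nat n eta : 0 < eta -> exists2 d : R, 0 < d & forall xi,
  pseudotrajectory dist phi d xi -> forall t0 s, 0 <= s <= n%:R ->
  dist (xi (t0 + s)) (phi s (xi t0)) < eta.
Proof.
elim: n eta => [|n IH] eta eta0.
  exists 1 => // xi _ t0 s /andP [h1 h2].
  have -> : s = 0 by apply/eqP; rewrite eq_le h1 andbT.
  by rewrite addr0 (phi0 Hf) d_xx.
have e2 : 0 < eta / 2 by rewrite divr_gt0.
have [g g0 Hg] := equi Hm Hc Hf e2.
have mg : 0 < Num.min g eta by rewrite lt_min g0 eta0.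
have [d d0 Hd] := IH (Num.min g eta) mg.
exists (Num.min d (eta / 2)); first by rewrite lt_min d0 e2.
move=> xi Hxi t0 s /andP [h1 h2].
have Hxi' : pseudotrajectory dist phi d xi.
  by apply: pseudo_mono Hxi; rewrite ge_min lexx.
case: (leP s n%:R) => hs.
  apply: lt_le_trans (Hd xi Hxi' t0 s _) _; first by rewrite h1.
  by rewrite ge_min lexx orbT.
rewrite -natr1 in h2.
set u := s - n%:R.
have u01 : 0 <= u <= 1 by apply/andP; split; rewrite /u; lra.
have -> : t0 + s = (t0 + n%:R) + u by rewrite /u; ring.
have -> : s = u + n%:R by rewrite /u; ring.
rewrite (phiD Hf).
apply: (le_lt_trans (d_tri Hm _ (phi u (xi (t0 + n%:R))) _)).
have -> : eta = eta / 2 + eta / 2 by field.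
apply: ltrD.
  by apply: lt_le_trans (Hxi _ _ u01) _; rewrite ge_min lexx orbT.
apply: Hg => //.
apply: lt_le_trans (Hd xi Hxi' t0 n%:R _) _; first by rewrite ler0n lexx.
by rewrite ge_min lexx.
Qed.

Lemma track T eta : 0 < eta -> exists2 d : R, 0 < d & forall xi,
  pseudotrajectory dist phi d xi -> forall t0 s, 0 <= s <= T ->
  dist (xi (t0 + s)) (phi s (xi t0)) < eta.
Proof.
move=> eta0; have [d d0 Hd] := track_nat (Num.trunc T).+1 eta0.
exists d => // xi Hxi t0 s /andP [h1 h2]; apply: Hd => //.
rewrite h1 /=; apply: (le_trans h2); apply: ltW; exact: truncnS_gt.
Qed.

Definition fwdcl (x y : M) := forall T e, 0 < e -> exists t, T <= t /\ dist y (phi t x) < e.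

Lemma fwd_cluster x : exists y, fwdcl x y.
Proof.
set F := (fun t => phi t x) @ (+oo : set_system R).
have PF : ProperFilter F by apply: fmap_proper_filter.
have [y [_ Cy]] := Hc PF filterT.
exists y => T e e0.
have FA : F [set z | exists t, T <= t /\ z = phi t x].
  exists T; split; first exact: num_real.
  by move=> t hT; exists t; split => //; exact: ltW.
have [z [[t [ht ->]] hz]] := Cy _ _ FA (ball_nbhs Hm y e0).
by exists t.
Qed.

Lemma fwdcl_omega x y : fwdcl x y -> omega_limit phi x y.
Proof.
move=> H T _; apply: (in_closure_d Hm) => e e0.
have [t [ht hd]] := H T e e0; exists (phi t x); split => //; by exists t.
Qed.

Lemma unstable_repel q x : lyapunov_unstable phi q ->
  (forall e, 0 < e -> exists t, 0 <= t /\ dist q (phi t x) < e) -> x = q.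
Proof.
move=> Hu H; apply/esym/(d_small Hm) => e e0.
have [U /(d_nbhs Hm) [b b0 Hb] HU] := Hu _ (ball_nbhs Hm q e0).
have [t [t0 ht]] := H b b0.
have := HU (- t) (phi t x); rewrite (phi_inv Hf); apply.
  by rewrite oppr_le0.
exact: Hb.
Qed.

End Flow3.
Section Trap.
Variables (R : realType) (M : topologicalType) (dist : M -> M -> R).
Hypothesis Hm : metric_inducing dist.
Hypothesis Hc : compact [set: M].
Variable phi : R -> M -> M.
Hypothesis Hf : is_flow phi.

Lemma sink_trap (Ls : set M) rho p : 0 < rho ->
  (forall x y, fwdcl dist phi x y -> Ls y) ->
  (forall y, Ls y -> dist p y < rho -> y = p) ->
  lyapunov_stable phi p ->
  forall e, 0 < e -> exists2 r : R, 0 < r & forall xi, pseudotrajectory dist phi r xi ->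
    forall t0, dist p (xi t0) < r -> forall t, t0 <= t -> dist p (xi t) < e.
Proof.
move=> rho0 HL Hiso Hs e e0.
set e1 := Num.min e rho / 2.
have mer : 0 < Num.min e rho by rewrite lt_min e0 rho0.
have e10 : 0 < e1 by rewrite divr_gt0.
have e1e : e1 + e1 <= e by rewrite /e1 -splitr ge_min lexx.
have e1r : e1 < rho.
  have : Num.min e rho <= rho by rewrite ge_min lexx orbT.
  rewrite /e1; lra.
have [U1 /(d_nbhs Hm) [del del0 Hdel] HU1] := Hs _ (ball_nbhs Hm p e10).
have H1 : forall t x, 0 <= t -> dist p x < del -> dist p (phi t x) < e1.
  by move=> t x t0 hx; apply: (HU1 t x t0 (Hdel x hx)).
have d4 : 0 < del / 4 by rewrite divr_gt0.
have [U2 /(d_nbhs Hm) [del2 del20 Hdel2] HU2] := Hs _ (ball_nbhs Hm p d4).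
have H2 : forall t x, 0 <= t -> dist p x < del2 -> dist p (phi t x) < del / 4.
  by move=> t x t0 hx; apply: (HU2 t x t0 (Hdel2 x hx)).
have cC : compact [set x | dist p x <= del / 2].
  exact: (subclosed_compact (closed_cball Hm (p:=p) (r:=del/2)) Hc (subsetT _)).
have : \forall T \near (+oo : set_system R), forall x, [set x | dist p x <= del / 2] x ->
    exists t, 0 <= t <= T /\ dist p (phi t x) < del2.
  apply: ((proj1 (compact_near_coveringP _) cC) R +oo
    (fun T x => exists t, 0 <= t <= T /\ dist p (phi t x) < del2)).
  move=> x /= hx.
  have hx' : dist p x < del by apply: le_lt_trans hx _; lra.
  have [y Hy] := fwd_cluster Hm Hc phi x.
  have Ly := HL x y Hy.
  have hpy : dist p y <= e1.
    apply/ler_addgt0Pr => e' e'0.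
    have [t [t0 ht]] := Hy 0 e' e'0.
    apply: (le_trans (d_tri Hm p (phi t x) y)); apply: lerD.
      by apply: ltW; apply: H1.
    by rewrite d_sym //; apply: ltW.
  have yp : y = p by apply: Hiso => //; apply: le_lt_trans hpy e1r.
  have d22 : 0 < del2 / 2 by rewrite divr_gt0.
  have [t [t0 ht]] := Hy 0 (del2/2) d22.
  rewrite yp in ht.
  have [b b0 Hb] := cont_t Hm Hf t x d22.
  exists ([set x' | dist x x' < b], [set T | t < T]).
    by split; [exact: ball_nbhs | exists t; split; [exact: num_real| by []]].
  move=> [x' T] [/= h1 h2]; exists t; split; first by rewrite t0 ltW.
  apply: (le_lt_trans (d_tri Hm p (phi t x) _)).
  have -> : del2 = del2/2 + del2/2 by field.
  by apply: ltrD => //; exact: Hb.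
move=> [M0 [M0r HM0]].
set T := `|M0| + 1.
have HMT : M0 < T by have := ler_norm M0; rewrite /T; lra.
have T1 : 1 <= T by have := normr_ge0 M0; rewrite /T; lra.
have T0 : 0 < T by lra.
have HT : forall x, dist p x <= del / 2 -> dist p (phi T x) < del / 4.
  move=> x hx; have [t [/andP [t0 tT] ht]] := HM0 T HMT x hx.
  have -> : T = (T - t) + t by ring.
  by rewrite (phiD Hf); apply: H2 => //; lra.
have eta0 : 0 < Num.min e1 (del/4) by rewrite lt_min e10 d4.
have [d d0 Hd] := track Hm Hc Hf T eta0.
exists (Num.min d (del / 2)); first by rewrite lt_min d0 divr_gt0.
move=> xi Hxi t0 h0.
have Hxi' : pseudotrajectory dist phi d xi.
  by apply: pseudo_mono Hxi; rewrite ge_min lexx.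
have Htr : forall a s, 0 <= s <= T -> dist (xi (a + s)) (phi s (xi a)) < e1 /\
    dist (xi (a + s)) (phi s (xi a)) < del / 4.
  by move=> a s hs; have := Hd xi Hxi' a s hs; rewrite lt_min => /andP.
have h0' : dist p (xi t0) < del / 2.
  by apply: lt_le_trans h0 _; rewrite ge_min lexx orbT.
have Q : forall n : nat, dist p (xi (t0 + n%:R * T)) <= del / 2 /\
    forall t, t0 <= t <= t0 + n%:R * T -> dist p (xi t) < e.
  elim => [|n [IH1 IH2]].
    rewrite mul0r addr0; split; first exact: ltW.
    move=> t /andP [a b]; have -> : t = t0 by apply/eqP; rewrite eq_le a b.
    have := H1 0 (xi t0) (lexx 0); rewrite (phi0 Hf) => H.
    have := H ltac:(lra); lra.
  set y := xi (t0 + n%:R * T).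
  have hy : dist p y < del by rewrite /y; lra.
  split.
    have [_ h] := Htr (t0 + n%:R*T) T ltac:(lra).
    rewrite (_ : t0 + n.+1%:R * T = t0 + n%:R*T + T); last by rewrite -natr1 mulrDl mul1r addrA.
    apply: (le_trans (d_tri Hm p (phi T y) _)).
    have := HT y IH1; rewrite d_sym // in h; lra.
  move=> t /andP [a b]; case: (leP t (t0 + n%:R * T)) => ht.
    by apply: IH2; rewrite a ht.
  set s := t - (t0 + n%:R*T).
  have hs : 0 <= s <= T.
    rewrite -natr1 mulrDl mul1r in b; apply/andP; split; rewrite /s; lra.
  have [h _] := Htr (t0 + n%:R*T) s hs.
  rewrite (_ : t0 + n%:R * T + s = t) in h; last by rewrite /s; ring.
  apply: (le_lt_trans (d_tri Hm p (phi s y) _)).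
  have := H1 s y ltac:(case/andP: hs => //) hy; rewrite d_sym // in h; lra.
move=> t ht.
have hn := truncnS_gt ((t - t0) / T).
rewrite ltr_pdivrMr // in hn.
apply: (proj2 (Q (Num.trunc ((t - t0) / T)).+1)); apply/andP; split => //; lra.
Qed.

End Trap.
Section Entry.
Variables (R : realType) (M : topologicalType) (dist : M -> M -> R).
Hypothesis Hm : metric_inducing dist.
Hypothesis Hc : compact [set: M].
Variable phi : R -> M -> M.
Hypothesis Hf : is_flow phi.

Lemma pseudo_entry (Ls : set M) ru rs : 0 < ru -> 0 < rs ->
  (forall x y, fwdcl dist phi x y -> Ls y) ->
  (forall y, Ls y -> lyapunov_stable phi y \/ lyapunov_unstable phi y) ->
  exists T : R, exists2 d : R, 0 < d & forall xi, pseudotrajectory dist phi d xi ->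
    forall t0, (forall q, Ls q -> lyapunov_unstable phi q -> ru <= dist q (xi t0)) ->
    exists s p, [/\ 0 <= s <= T, Ls p, lyapunov_stable phi p & dist p (xi (t0 + s)) < rs].
Proof.
move=> ru0 rs0 HL Hd.
have rs2 : 0 < rs / 2 by rewrite divr_gt0.
have rs4 : 0 < rs / 4 by rewrite divr_gt0.
have cK : compact [set x | forall q, (Ls q /\ lyapunov_unstable phi q) -> ru <= dist q x].
  exact: (subclosed_compact (closed_far Hm (Q := fun q => Ls q /\ lyapunov_unstable phi q) (r := ru)) Hc (subsetT _)).
have : \forall T \near (+oo : set_system R), forall x,
    [set x | forall q, (Ls q /\ lyapunov_unstable phi q) -> ru <= dist q x] x ->
    exists s p, [/\ 0 <= s <= T, Ls p, lyapunov_stable phi p & dist p (phi s x) < rs / 2].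
  apply: ((proj1 (compact_near_coveringP _) cK) R +oo
    (fun T x => exists s p, [/\ 0 <= s <= T, Ls p, lyapunov_stable phi p & dist p (phi s x) < rs / 2])).
  move=> x /= Kx.
  have [y Hy] := fwd_cluster Hm Hc phi x.
  have Ly := HL x y Hy.
  have Sy : lyapunov_stable phi y.
    case: (Hd y Ly) => // Uy; exfalso.
    have xy : x = y.
      apply: (unstable_repel Hm Hf Uy) => e e0.
      by have [t [t0 ht]] := Hy 0 e e0; exists t.
    by have := Kx y (conj Ly Uy); rewrite xy d_xx //; lra.
  have [t [t0 ht]] := Hy 0 (rs/4) rs4.
  have [b b0 Hb] := cont_t Hm Hf t x rs4.
  exists ([set x' | dist x x' < b], [set T | t < T]).
    by split; [exact: ball_nbhs | exists t; split; [exact: num_real| by []]].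
  move=> [x' T] [/= h1 h2]; exists t, y; split => //; first by rewrite t0 ltW.
  apply: (le_lt_trans (d_tri Hm y (phi t x) _)).
  have := Hb x' h1; lra.
move=> [M0 [M0r HM0]].
set T := `|M0| + 1.
have HMT : M0 < T by have := ler_norm M0; rewrite /T; lra.
have [d d0 Hdt] := track Hm Hc Hf T rs2.
exists T, d => // xi Hxi t0 Ht0.
have [s [p [hs Lp Sp hp]]] := HM0 T HMT (xi t0) (fun q hq => Ht0 q hq.1 hq.2).
exists s, p; split => //.
apply: (le_lt_trans (d_tri Hm p (phi s (xi t0)) _)).
have := Hdt xi Hxi t0 s hs; rewrite d_sym //; lra.
Qed.

End Entry.
Section Rev.
Variables (R : realType) (M : topologicalType) (dist : M -> M -> R).
Hypothesis Hm : metric_inducing dist.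
Hypothesis Hc : compact [set: M].
Variable phi : R -> M -> M.
Hypothesis Hf : is_flow phi.

Lemma rev_flow : is_flow (fun t x => phi (- t) x).
Proof.
case: Hf => cf h0 hD; split.
- suff : continuous (fun p : R * M => phi (- p.1) p.2) by [].
  move=> [s x].
  apply: (@continuous_comp _ _ _ (fun p : R * M => (- p.1, p.2)) (fun p : R * M => phi p.1 p.2)); last exact: cf.
  move=> A HA0; rewrite /nbhs /= /filter_prod /filter_from /= in HA0.
  case: HA0 => [[A1 A2]] /= [] /nbhs_ballP [e e0 hA1] hA2 HA.
  change (nbhs (s, x) ((fun p : R*M => (-p.1,p.2)) @^-1` A)).
  exists ([set s' | A1 (- s')], A2) => /=; first split => //.
    apply/nbhs_ballP; exists e => // s' hs; apply: hA1.
    by move: hs; rewrite /ball /= -opprD normrN.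
  by move=> [s' y] [/= h1 h2]; apply: HA; split.
- by move=> x /=; rewrite oppr0.
- by move=> s t x /=; rewrite opprD.
Qed.

Lemma rev_stable q : lyapunov_unstable phi q -> lyapunov_stable (fun t x => phi (- t) x) q.
Proof.
move=> Hu V HV; have [U HU H] := Hu V HV; exists U => // t x t0 Ux.
by apply: H => //; rewrite oppr_le0.
Qed.

Lemma fwdcl_limit x y : fwdcl dist phi x y -> limit_set phi y.
Proof. by move=> H; exists x => //; left; exact: (fwdcl_omega Hm). Qed.

Lemma rev_fwdcl x y : fwdcl dist (fun t x => phi (- t) x) x y -> limit_set phi y.
Proof.
move=> H; exists x => //; right => T _; apply: (in_closure_d Hm) => e e0.
have [t [ht hd]] := H (- T) e e0; exists (phi (- t) x); split => //.
by exists (- t) => //=; rewrite lerNl.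
Qed.

Lemma rev_pseudo d' : 0 < d' -> exists2 d : R, 0 < d & forall xi,
  pseudotrajectory dist phi d xi ->
  pseudotrajectory dist (fun t x => phi (- t) x) d' (fun t => xi (- t)).
Proof.
move=> d'0; have [g g0 Hg] := equi Hm Hc rev_flow d'0.
exists g => // xi Hxi t s hs /=.
have := Hxi (- (t + s)) s hs; rewrite (_ : - (t + s) + s = - t); last by ring.
move=> h; have := Hg (phi s (xi (- (t + s)))) (xi (- t)) _ s hs.
rewrite (phi_inv Hf); apply; by rewrite d_sym.
Qed.

Lemma source_trap (Ls : set M) rho q : 0 < rho ->
  (forall x y, fwdcl dist (fun t x => phi (- t) x) x y -> Ls y) ->
  (forall y, Ls y -> dist q y < rho -> y = q) ->
  lyapunov_unstable phi q ->
  forall e, 0 < e -> exists2 r : R, 0 < r & forall xi, pseudotrajectory dist phi r xi ->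
    forall t0, dist q (xi t0) < r -> forall t, t <= t0 -> dist q (xi t) < e.
Proof.
move=> rho0 HL Hiso Hu e e0.
have [r' r'0 Hr'] := sink_trap Hm Hc rev_flow rho0 HL Hiso (rev_stable Hu) e0.
have [d d0 Hd] := rev_pseudo r'0.
exists (Num.min r' d); first by rewrite lt_min r'0 d0.
move=> xi Hxi t0 h t ht.
have Hxi' : pseudotrajectory dist phi d xi.
  by apply: pseudo_mono Hxi; rewrite ge_min lexx orbT.
have := Hr' (fun t => xi (- t)) (Hd xi Hxi') (- t0) _ (- t) _; rewrite ?opprK; apply.
  by apply: lt_le_trans h _; rewrite ge_min lexx.
by rewrite lerN2.
Qed.

End Rev.
Lemma cont_shift (R : realType) (c : R) : continuous (fun t : R => t + c).
Proof. move=> t; apply: cvgD; [exact: cvg_id | exact: cvg_cst]. Qed.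

Lemma Rep_shift (R : realType) (c : R) : Rep (fun t : R => t + c).
Proof.
split; first exact: cont_shift.
  by move=> x y hxy; rewrite ltrD2r.
exists (fun t => t + - c); split; first exact: cont_shift.
  by move=> t; rewrite addrK.
by move=> t; rewrite subrK.
Qed.

Lemma unif_list (T : eqType) (R : realType) (s : seq T) (P : T -> R -> Prop) :
  (forall p r r', 0 < r' -> r' <= r -> P p r -> P p r') ->
  (forall p, p \in s -> exists2 r, 0 < r & P p r) ->
  exists2 r, 0 < r & forall p, p \in s -> P p r.
Proof.
move=> Hmono; elim: s => [|a s IH] H.
  by exists 1 => // p; rewrite in_nil.
have [ra ra0 Pa] := H a (mem_head a s).
have [rs rs0 Ps] : exists2 r, 0 < r & forall p, p \in s -> P p r.
  by apply: IH => p hp; apply: H; rewrite inE hp orbT.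
exists (Num.min ra rs); first by rewrite lt_min ra0 rs0.
have m0 : 0 < Num.min ra rs by rewrite lt_min ra0 rs0.
move=> p; rewrite inE => /orP [/eqP -> | hp].
  by apply: Hmono Pa => //; rewrite ge_min lexx.
by apply: Hmono (Ps p hp) => //; rewrite ge_min lexx orbT.
Qed.

Lemma sep_list (R : realType) (M : topologicalType) (dist : M -> M -> R)
  (Hm : metric_inducing dist) (s : seq M) :
  exists2 rho, 0 < rho & forall p q, p \in s -> q \in s -> p <> q -> rho <= dist p q.
Proof.
have [rho rho0 H] : exists2 rho : R, 0 < rho &
    forall p, p \in s -> forall q, q \in s -> p <> q -> rho <= dist p q.
  apply: unif_list.
    by move=> p r r' _ rr H q hq pq; apply: le_trans rr (H q hq pq).
  move=> p _.
  apply: unif_list => [q r r' _ rr H pq|q _]; first by apply: le_trans rr (H pq).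
  case: (pselect (p = q)) => [pq | npq]; first by exists 1.
  exists (dist p q) => //.
  rewrite lt_neqAle d_ge0 // andbT; apply/eqP => h.
  by apply: npq; apply/(d_eq0 Hm); rewrite h.
by exists rho => // p q hp hq; apply: H.
Qed.
Theorem corollary1p3 (R : realType) (M : topologicalType)
  (dist : M -> M -> R) (phi : R -> M -> M) :
  metric_inducing dist ->
  topological_manifold R M ->
  compact [set: M] ->
  is_flow phi ->
  finite_set (limit_set phi) ->
  (forall p, limit_set phi p ->
     singularity phi p /\ (lyapunov_stable phi p \/ lyapunov_unstable phi p)) ->
  oriented_shadowing dist phi.
Proof.
move=> Hm _ Hc Hf Hfin HL eps eps0.
set Ls := limit_set phi.
have [sL HsL] := (finite_seqP Ls).1 Hfin.
have memL : forall p, Ls p -> p \in sL by move=> p; rewrite HsL.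
have [rho rho0 Hsep] := sep_list Hm sL.
have Hsep' : forall p q, Ls p -> Ls q -> dist p q < rho -> p = q.
  move=> p q Lp Lq h; case: (pselect (p = q)) => // npq.
  by have := Hsep p q (memL p Lp) (memL q Lq) npq; rewrite leNgt h.
set e := Num.min eps rho / 4.
have mer : 0 < Num.min eps rho by rewrite lt_min eps0 rho0.
have e0 : 0 < e by rewrite divr_gt0.
have mle : Num.min eps rho <= eps by rewrite ge_min lexx.
have mlr : Num.min eps rho <= rho by rewrite ge_min lexx orbT.
have e2eps : e + e <= eps by rewrite /e; lra.
have e2rho : e + e < rho by rewrite /e; lra.
have HLfw : forall x y, fwdcl dist phi x y -> Ls y.
  by move=> x y h; exact: (fwdcl_limit Hm h).
have HLrv : forall x y, fwdcl dist (fun t x => phi (- t) x) x y -> Ls y.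
  by move=> x y h; exact: (rev_fwdcl Hm h).
have [r r0 Hr] : exists2 r : R, 0 < r & forall p, p \in sL ->
    (lyapunov_stable phi p -> forall xi, pseudotrajectory dist phi r xi ->
       forall t0, dist p (xi t0) < r -> forall t, t0 <= t -> dist p (xi t) < e) /\
    (lyapunov_unstable phi p -> forall xi, pseudotrajectory dist phi r xi ->
       forall t0, dist p (xi t0) < r -> forall t, t <= t0 -> dist p (xi t) < e).
  apply: unif_list.
    move=> p r r' r'0 rr [h1 h2]; split.
      move=> Hs xi Hxi t0 h; apply: h1 => //; first exact: pseudo_mono rr Hxi.
      exact: lt_le_trans h rr.
    move=> Hu xi Hxi t0 h; apply: h2 => //; first exact: pseudo_mono rr Hxi.
    exact: lt_le_trans h rr.
  move=> p hp.
  have Lp : Ls p by rewrite HsL.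
  have Iso : forall y, Ls y -> dist p y < rho -> y = p.
    by move=> y Ly h; apply/esym/Hsep'.
  have [r1 r10 H1] : exists2 r1 : R, 0 < r1 & (lyapunov_stable phi p -> forall xi,
      pseudotrajectory dist phi r1 xi ->
      forall t0, dist p (xi t0) < r1 -> forall t, t0 <= t -> dist p (xi t) < e).
    case: (pselect (lyapunov_stable phi p)) => [Hs | nHs]; last by exists 1.
    have [r1 r10 H] := sink_trap Hm Hc Hf rho0 HLfw Iso Hs e0.
    by exists r1.
  have [r2 r20 H2] : exists2 r2 : R, 0 < r2 & (lyapunov_unstable phi p -> forall xi,
      pseudotrajectory dist phi r2 xi ->
      forall t0, dist p (xi t0) < r2 -> forall t, t <= t0 -> dist p (xi t) < e).
    case: (pselect (lyapunov_unstable phi p)) => [Hu | nHu]; last by exists 1.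
    have [r2 r20 H] := source_trap Hm Hc Hf rho0 HLrv Iso Hu e0.
    by exists r2.
  exists (Num.min r1 r2); first by rewrite lt_min r10 r20.
  split.
    move=> Hs xi Hxi t0 h; apply: H1 => //.
      by apply: pseudo_mono Hxi; rewrite ge_min lexx.
    by apply: lt_le_trans h _; rewrite ge_min lexx.
  move=> Hu xi Hxi t0 h; apply: H2 => //.
    by apply: pseudo_mono Hxi; rewrite ge_min lexx orbT.
  by apply: lt_le_trans h _; rewrite ge_min lexx orbT.
have r2 : 0 < r / 2 by rewrite divr_gt0.
have [T [dpe dpe0 Hpe]] := pseudo_entry Hm Hc Hf r0 r2 HLfw (fun y Ly => (HL y Ly).2).
have eta0 : 0 < Num.min (r / 2) eps by rewrite lt_min r2 eps0.
have [dtr dtr0 Htr] := track Hm Hc Hf (T + 2) eta0.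
exists (Num.min r (Num.min dpe dtr)); first by rewrite !lt_min r0 dpe0 dtr0.
move=> xi Hxi.
have Hxr : pseudotrajectory dist phi r xi.
  by apply: pseudo_mono Hxi; rewrite ge_min lexx.
have Hxpe : pseudotrajectory dist phi dpe xi.
  by apply: pseudo_mono Hxi; rewrite !ge_min lexx orbT.
have Hxtr : pseudotrajectory dist phi dtr xi.
  by apply: pseudo_mono Hxi; rewrite !ge_min lexx !orbT.
have shadow_fix : forall p, Ls p -> (forall s, dist p (xi s) < e) ->
    exists (x : M) (h : R -> R), Rep h /\ forall t, dist (xi t) (phi (h t) x) < eps.
  move=> p Lp H; exists p, (fun t => t + 0); split; first exact: Rep_shift.
  move=> t; rewrite (HL p Lp).1 d_sym //; have := H t; lra.
set U := fun t => exists q, [/\ Ls q, lyapunov_unstable phi q & dist q (xi t) < r].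
have notU : forall t, ~ U t -> forall q, Ls q -> lyapunov_unstable phi q -> r <= dist q (xi t).
  move=> t nU q Lq Uq; rewrite leNgt; apply/negP => h; apply: nU; by exists q.
case: (pselect (forall T0, exists t, T0 <= t /\ U t)) => [HU | HnU].
  have [t1 [t10 [q [Lq Uq hq]]]] := HU 0.
  apply: (shadow_fix q Lq) => s.
  have [t2 [t2h [q2 [Lq2 Uq2 hq2]]]] := HU (Num.max s t1).
  have [_ Hu2] := Hr q2 (memL q2 Lq2).
  have [_ Hu1] := Hr q (memL q Lq).
  have hs2 : s <= t2 by apply: le_trans t2h; rewrite le_max lexx.
  have h12 : t1 <= t2 by apply: le_trans t2h; rewrite le_max lexx orbT.
  have a1 := Hu2 Uq2 xi Hxr t2 hq2 s hs2.
  have a2 := Hu2 Uq2 xi Hxr t2 hq2 t1 h12.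
  have a3 := Hu1 Uq xi Hxr t1 hq t1 (lexx _).
  have qq : q = q2.
    apply: Hsep' => //; apply: (le_lt_trans (d_tri Hm q (xi t1) q2)).
    rewrite (d_sym Hm (xi t1)); lra.
  by rewrite qq.
have [T1 HT1] : exists T1, forall t, T1 <= t -> ~ U t.
  case: (pselect (exists T1, forall t, T1 <= t -> ~ U t)) => // H; exfalso.
  apply: HnU => T0; apply: contrapT => hn; apply: H; exists T0 => t ht Ut.
  by apply: hn; exists t.
case: (pselect (exists t, U t)) => [[t' Ut'] | HnU2].
  have hS : has_sup [set t | U t].
    split; first by exists t'.
    exists T1 => t /= Ut; rewrite leNgt; apply/negP => ht.
    exact: HT1 t (ltW ht) Ut.
  set a := sup [set t | U t].
  have [c Sc hc] := sup_adherent ltr01 hS; rewrite -/a in hc.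
  have ca : c <= a := sup_upper_bound hS Sc.
  have nUa : forall t, a < t -> ~ U t.
    move=> t ht Ut; have := sup_upper_bound hS Ut; rewrite -/a; lra.
  have [q [Lq Uq hq]] := Sc.
  have a1 : a < a + 1 by lra.
  have [s [p [hs Lp Sp hp]]] := Hpe xi Hxpe (a + 1) (notU _ (nUa _ a1)).
  have [Hs_p _] := Hr p (memL p Lp).
  have [_ Hu_q] := Hr q (memL q Lq).
  have Hz := orbit_pseudo Hm Hf (- c) (xi c) r0.
  exists (xi c), (fun t => t + - c); split; first exact: Rep_shift.
  move=> t.
  case/andP: hs => s0 sT.
  case: (leP t c) => htc.
    have b1 := Hu_q Uq xi Hxr c hq t htc.
    have b2 := Hu_q Uq _ Hz c (ltac:(by rewrite /= addrN (phi0 Hf))) t htc.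
    apply: (le_lt_trans (d_tri Hm _ q _)); rewrite (d_sym Hm (xi t) q); lra.
  case: (leP t (a + 1 + s)) => htb.
    have hr : 0 <= t - c <= T + 2 by apply/andP; split; lra.
    have := Htr xi Hxtr c (t - c) hr.
    rewrite (_ : c + (t - c) = t); last by ring.
    have : Num.min (r / 2) eps <= eps by rewrite ge_min lexx orbT.
    lra.
  have hr : 0 <= a + 1 + s - c <= T + 2 by apply/andP; split; lra.
  have := Htr xi Hxtr c (a + 1 + s - c) hr.
  rewrite (_ : c + (a + 1 + s - c) = a + 1 + s); last by ring.
  have : Num.min (r / 2) eps <= r / 2 by rewrite ge_min lexx.
  move=> hm hb.
  have zb : dist p (phi (a + 1 + s - c) (xi c)) < r.
    apply: (le_lt_trans (d_tri Hm _ (xi (a + 1 + s)) _)); lra.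
  have c1 := Hs_p Sp _ Hz (a + 1 + s) zb t (ltW htb).
  have hpr : dist p (xi (a + 1 + s)) < r by lra.
  have c2 := Hs_p Sp xi Hxr (a + 1 + s) hpr t (ltW htb).
  apply: (le_lt_trans (d_tri Hm _ p _)); rewrite (d_sym Hm (xi t) p); lra.
have key : forall v, exists p, [/\ Ls p, lyapunov_stable phi p &
    forall t, v <= t -> dist p (xi t) < e].
  move=> v.
  have [s [p [hs Lp Sp hp]]] := Hpe xi Hxpe (v - T) (notU _ (fun h => HnU2 (ex_intro _ _ h))).
  exists p; split => // t ht.
  have [Hs_p _] := Hr p (memL p Lp).
  apply: (Hs_p Sp xi Hxr (v - T + s)) => //; first lra.
  by case/andP: hs => _ ?; lra.
have [p0 [Lp0 Sp0 H0]] := key 0.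
apply: (shadow_fix p0 Lp0) => v.
have [pv [Lpv _ Hv]] := key v.
have m1 : v <= Num.max v 0 by rewrite le_max lexx.
have m2 : 0 <= Num.max v 0 by rewrite le_max lexx orbT.
have pp : p0 = pv.
  apply: Hsep' => //; apply: (le_lt_trans (d_tri Hm p0 (xi (Num.max v 0)) pv)).
  have := H0 _ m2; have := Hv _ m1; rewrite (d_sym Hm pv); lra.
by rewrite pp; apply: Hv.
Qed.
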